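(* Let $\mu>0$, $\sigma\ge0$, and let $A$ be the randomized single-item mechanism that posts price $\frac{1}{2}\mu$ with probability $\frac12$ and price $\mu+\frac{\sigma^2}{\mu}$ with probability $\frac12$. Then for every distribution $F$ supported on exactly two points, with mean $\mu$ and variance exactly $\sigma^2$, we have $\mathrm{REV}(A;F)\ge\frac14\,\mathrm{OPT}(F)$.
   Context: Single item, single buyer with nonnegative value $X\sim F$; the buyer buys iff $X$ is at least the posted price. $\mathrm{REV}(p;F)=p\Pr[X\ge p]$, for a distribution $A$ over prices $\mathrm{REV}(A;F)=\mathbb{E}_{p\sim A}[\mathrm{REV}(p;F)]$, and $\mathrm{OPT}(F)=\sup_{p\ge0}\mathrm{REV}(p;F)$. *)

(* Defs.v *)
From mathcomp Require Import all_boot all_order all_algebra.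
From mathcomp Require Import all_classical all_reals.
Set Implicit Arguments. Unset Strict Implicit. Unset Printing Implicit Defensive.
Import Order.TTheory GRing.Theory Num.Theory.
Local Open Scope ring_scope.
Local Open Scope classical_set_scope.

Section Defs.
Variable R : realType.

(* A distribution F supported on exactly two points: value a with probability
   wa and value b with probability wb, where a <> b, wa, wb > 0, wa + wb = 1. *)
Record twopoint := TwoPoint { tp_a : R; tp_b : R; tp_wa : R; tp_wb : R }.

Definition valid_twopoint (F : twopoint) : Prop :=
  0 <= tp_a F /\ 0 <= tp_b F /\ tp_a F != tp_b F /\
  0 < tp_wa F /\ 0 < tp_wb F /\ tp_wa F + tp_wb F = 1.

Definition tailprob (F : twopoint) (p : R) : R :=
  (if p <= tp_a F then tp_wa F else 0) + (if p <= tp_b F then tp_wb F else 0).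

Definition mean (F : twopoint) : R := tp_wa F * tp_a F + tp_wb F * tp_b F.

Definition variance (F : twopoint) : R :=
  tp_wa F * (tp_a F - mean F) ^+ 2 + tp_wb F * (tp_b F - mean F) ^+ 2.

Definition REV (p : R) (F : twopoint) : R := p * tailprob F p.

(* a randomized mechanism: finite list of (price, probability) pairs;
   REV(A;F) = E_{p ~ A}[REV(p;F)] *)
Definition REVmix (A : seq (R * R)) (F : twopoint) : R :=
  \sum_(pw <- A) pw.2 * REV pw.1 F.

Definition OPT (F : twopoint) : R := sup [set REV p F | p in [set p : R | 0 <= p]].

End Defs.

(* Main.v *)
Require Import Defs.
From mathcomp Require Import all_boot all_order all_algebra.
From mathcomp Require Import all_classical all_reals.
From mathcomp Require Import ring lra.
Import Order.TTheory GRing.Theory Num.Theory.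
Local Open Scope ring_scope.

Lemma main (R : realType) (mu sigma : R) (hmu : 0 < mu) (F : twopoint R) :
  valid_twopoint F -> tp_a F < tp_b F -> mean F = mu -> variance F = sigma ^+ 2 ->
  forall p, 0 <= p ->
  REV p F <= 4 * REVmix [:: (mu / 2, 1 / 2); (mu + sigma ^+ 2 / mu, 1 / 2)] F.
Proof.
case: F => a b wa wb; rewrite /valid_twopoint /mean /variance /=.
move=> [ha [hb [_ [hwa [hwb hw]]]]] hab hmean hvar p hp.
rewrite /mean /= hmean in hvar.
rewrite /REVmix !big_cons big_nil /REV /tailprob /=.
set q := mu + sigma ^+ 2 / mu.
have hmu0 : mu != 0 by rewrite gt_eqF.
have hq1 : mu * q = wa * a ^+ 2 + wb * b ^+ 2.
  rewrite /q mulrDr mulrCA divff // mulr1 -hvar -hmean.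
  have -> : wb = 1 - wa by lra.
  ring.
have h1 : a < mu by nra.
have h2 : mu < b by nra.
have hq : mu <= q.
  rewrite /q lerDl; apply: divr_ge0; [exact: sqr_ge0 | lra].
have hqb : q <= b.
  have : mu * q <= mu * b by rewrite hq1 -hmean; nra.
  by rewrite ler_pM2l.
have Hp : p * ((if p <= a then wa else 0) + (if p <= b then wb else 0)) <= a
   \/ p * ((if p <= a then wa else 0) + (if p <= b then wb else 0)) <= b * wb.
  case: ifP => pa; case: ifP => pb.
  - left; rewrite hw; lra.
  - exfalso; move/negbT: pb; rewrite -ltNge => pb; lra.
  - right; nra.
  - left; lra.
have Hq2 : (if q <= a then wa else 0) + (if q <= b then wb else 0) = wb.
  rewrite ifF ?hqb ?add0r //; apply/negbTE; rewrite -ltNge; lra.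
rewrite Hq2.
have hmb : 0 <= mu / 2 * ((if mu / 2 <= a then wa else 0) + (if mu / 2 <= b then wb else 0)).
  case: ifP; case: ifP => *; nra.
case: (lerP (mu / 2) a) hmb => hma hmb.
  have -> : mu / 2 <= b by lra.
  rewrite hw.
  have : 0 <= q * wb by nra.
  case: Hp => Hp; nra.
have hwbb : a < wb * b.
  have : wa * a <= a by nra.
  lra.
have h2q : b <= 2 * q.
  have : b * mu <= 2 * (mu * q).
    rewrite hq1 -hmean.
    have e1 : a * b <= wb * b * b by nra.
    have e2 : wa * a * b <= a * b by nra.
    have e3 : 0 <= wa * a ^+ 2 by nra.
    lra.
  move=> H; rewrite -(ler_pM2l hmu); nra.
have e4 : b * wb <= 2 * q * wb by nra.
case: Hp => Hp; lra.
Qed.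

Lemma swapREV (R : realType) (F : twopoint R) p :
  REV p F = REV p (TwoPoint (tp_b F) (tp_a F) (tp_wb F) (tp_wa F)).
Proof. by rewrite /REV /tailprob /= addrC. Qed.

Theorem proposition2 (R : realType) (mu sigma : R) (hmu : 0 < mu) (hsigma : 0 <= sigma)
  (F : twopoint R) :
  valid_twopoint F -> mean F = mu -> variance F = sigma ^+ 2 ->
  REVmix [:: (mu / 2, 1 / 2); (mu + sigma ^+ 2 / mu, 1 / 2)] F >= OPT F / 4.
Proof.
move=> hv hm hvar.
suff H : forall p, 0 <= p ->
  REV p F <= 4 * REVmix [:: (mu / 2, 1 / 2); (mu + sigma ^+ 2 / mu, 1 / 2)] F.
  rewrite ler_pdivrMr //  mulrC.
  apply: ge_sup; first by exists (REV 0 F); exists 0 => //=.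
  by move=> _ [p hp <-]; apply: H.
move: hv hm hvar; case: F => a b wa wb.
move=> hv hm hvar p hp.
case: (ltrgtP a b) => hab.
- exact: main.
- rewrite /REVmix !big_cons big_nil /= !(@swapREV R (TwoPoint a b wa wb)) /=.
  have := (@main R mu sigma hmu (TwoPoint b a wb wa)).
  rewrite /REVmix !big_cons big_nil /=; apply => //.
  + move: hv; rewrite /valid_twopoint /= => -[? [? [h [? [? ?]]]]].
    by do !split => //; [rewrite eq_sym | rewrite addrC].
  + by rewrite -hm /mean /= addrC.
  + rewrite -hvar /variance /mean /= addrC; congr (_ + _); congr (_ * (_ - _) ^+ 2); by rewrite addrC.
- by move: hv; rewrite /valid_twopoint /= hab eqxx => -[_ [_ [] ]].
Qed.
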